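(* The partial order $\unlhd$ on $(\mathbb{M}_{\mathrm{GHP}},d_{\mathrm{GHP}})$ is closed, i.e. its graph $\{(\mathcal{X},\mathcal{X}'):\mathcal{X}\unlhd\mathcal{X}'\}$ is closed in $\mathbb{M}_{\mathrm{GHP}}\times\mathbb{M}_{\mathrm{GHP}}$; equivalently, if $\mathcal{X}_n\to\mathcal{X}_\infty$, $\mathcal{X}'_n\to\mathcal{X}'_\infty$ and $\mathcal{X}_n\unlhd\mathcal{X}'_n$ for all $n$, then $\mathcal{X}_\infty\unlhd\mathcal{X}'_\infty$.
   Context: $\mathbb{M}_{\mathrm{GHP}}$ is the space of measure-preserving isometry classes of compact metric spaces with a finite Borel measure, with the Gromov--Hausdorff--Prokhorov metric $d_{\mathrm{GHP}}$ (infimum over common isometric embeddings of Hausdorff distance of images plus Prokhorov distance of pushed-forward measures). $[X,d,\mu]\unlhd[X',d',\mu']$ means there is a surjective map $\phi:X'\to X$ with $d(\phi(x'),\phi(y'))\le d'(x',y')$ for all $x',y'\in X'$ and $\mu(A)\le\mu'(\phi^{-1}(A))$ for all Borel $A\subset X$. *)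

(* Defs.v *)
From HB Require Import structures.
From mathcomp Require Import all_boot all_order all_algebra.
From mathcomp Require Import all_classical all_reals all_analysis.
Set Implicit Arguments. Unset Strict Implicit. Unset Printing Implicit Defensive.
Import Order.TTheory GRing.Theory Num.Theory numFieldNormedType.Exports.
Local Open Scope classical_set_scope.
Local Open Scope ring_scope.

Record metric_space (R : realType) := MetricSpace {
  ms_car :> Type;
  ms_dist : ms_car -> ms_car -> R;
  ms_dist_eq0 : forall x y, ms_dist x y = 0 <-> x = y;
  ms_dist_sym : forall x y, ms_dist x y = ms_dist y x;
  ms_dist_tri : forall x y z, ms_dist x z <= ms_dist x y + ms_dist y z }.

Section metric_notions.
Context {R : realType} (X : metric_space R).

Definition ms_ball (x : X) (e : R) : set X := [set y | ms_dist x y < e].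

Definition ms_open (U : set X) : Prop :=
  forall x, U x -> exists2 e : R, 0 < e & ms_ball x e `<=` U.

Definition ms_closed (F : set X) : Prop := ms_open (~` F).

Definition ms_nbhd (A : set X) (e : R) : set X :=
  [set z | exists2 x, A x & ms_dist x z < e].

Definition ms_compact : Prop :=
  forall C : set (set X), (forall U, C U -> ms_open U) ->
    (forall x, exists2 U, C U & U x) ->
    exists s : seq (set X), (forall U, U \in s -> C U) /\
      (forall x, exists2 U, U \in s & U x).

Definition ms_borel : set (set X) := <<s setT, ms_open >>.

Definition finite_borel_measure (mu : set X -> R) : Prop :=
  [/\ mu set0 = 0,
      forall A, ms_borel A -> 0 <= mu A &
      forall F : nat -> set X, (forall n, ms_borel (F n)) -> trivIset setT F ->
        (fun n => \sum_(0 <= k < n) mu (F k)) @ \oo --> mu (\bigcup_k F k)].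

Definition hausdorff_dist (A B : set X) : R :=
  inf [set e : R | 0 < e /\ A `<=` ms_nbhd B e /\ B `<=` ms_nbhd A e].

Definition prokhorov_dist (mu nu : set X -> R) : R :=
  inf [set e : R | 0 < e /\ forall F, ms_closed F ->
         mu F <= nu (ms_nbhd F e) + e /\ nu F <= mu (ms_nbhd F e) + e].
End metric_notions.

Definition isometric_embedding {R : realType} (X Z : metric_space R)
  (f : X -> Z) : Prop := forall x y, ms_dist (f x) (f y) = ms_dist x y.

Record cmm_space (R : realType) := CMMSpace {
  cmm_ms :> metric_space R;
  cmm_point : cmm_ms;
  cmm_compact : ms_compact cmm_ms;
  cmm_mu : set cmm_ms -> R;
  cmm_measure : finite_borel_measure cmm_mu }.

Definition d_GHP {R : realType} (X Y : cmm_space R) : R :=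
  inf [set r : R | exists (Z : metric_space R) (f : X -> Z) (g : Y -> Z),
    [/\ isometric_embedding f, isometric_embedding g &
        r = hausdorff_dist (f @` setT) (g @` setT) +
            prokhorov_dist (fun B => @cmm_mu _ X (f @^-1` B))
                           (fun B => @cmm_mu _ Y (g @^-1` B))]].

Definition ghp_le {R : realType} (X X' : cmm_space R) : Prop :=
  exists phi : X' -> X,
    [/\ forall x : X, exists x' : X', phi x' = x,
        forall x' y' : X', ms_dist (phi x') (phi y') <= ms_dist x' y' &
        forall A : set X, ms_borel A -> @cmm_mu _ X A <= @cmm_mu _ X' (phi @^-1` A)].

(* Main.v *)
Require Import Defs.
From HB Require Import structures.
From mathcomp Require Import all_boot all_order all_algebra.
From mathcomp Require Import all_classical all_reals all_analysis.
From mathcomp Require Import lra.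
Import Order.TTheory GRing.Theory Num.Theory numFieldNormedType.Exports.
Local Open Scope classical_set_scope.
Local Open Scope ring_scope.

Section metric_basics.
Context {R : realType} {X : metric_space R}.

Lemma ms_dist_xx (x : X) : ms_dist x x = 0.
Proof. by apply/ms_dist_eq0. Qed.

Lemma ms_dist_ge0 (x y : X) : 0 <= ms_dist x y.
Proof.
have := ms_dist_tri x y x; rewrite ms_dist_xx (ms_dist_sym y x) => h.
by rewrite -(@pmulr_rge0 _ 2) // mulr2n mulrDl mul1r.
Qed.

Lemma ms_ball_open (x : X) e : ms_open (ms_ball x e).
Proof.
move=> y /= hy; exists (e - ms_dist x y); first by rewrite subr_gt0.
move=> z; rewrite /ms_ball /= => hz; have := ms_dist_tri x y z; lra.
Qed.

Lemma ms_nbhd_open (A : set X) e : ms_open (ms_nbhd A e).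
Proof.
move=> y [x Ax hxy]; exists (e - ms_dist x y); first by rewrite subr_gt0.
move=> z; rewrite /ms_ball /= => hz; exists x => //; have := ms_dist_tri x y z; lra.
Qed.

Lemma ms_open_setU (A B : set X) : ms_open A -> ms_open B -> ms_open (A `|` B).
Proof.
move=> oA oB x [/oA [e e0 h]|/oB [e e0 h]]; exists e => // y /h; by [left|right].
Qed.

Lemma ms_open_setI (A B : set X) : ms_open A -> ms_open B -> ms_open (A `&` B).
Proof.
move=> oA oB x [/oA [e e0 h] /oB [e' e0' h']]; exists (Num.min e e').
  by rewrite lt_min e0 e0'.
move=> y /= hy; split; [apply: h|apply: h'];
  by apply: lt_le_trans hy _; rewrite ge_min lexx ?orbT.
Qed.

Lemma ms_open_bigcup (A : nat -> set X) : (forall n, ms_open (A n)) -> ms_open (\bigcup_n A n).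
Proof.
move=> oA x [n _ /oA [e e0 h]]; exists e => // y /h; by exists n.
Qed.

Lemma ms_open0 : ms_open (@set0 X). Proof. by move=> x. Qed.
Lemma ms_openT : ms_open (@setT X). Proof. by move=> x _; exists 1. Qed.

Lemma ms_closed_setU (A B : set X) : ms_closed A -> ms_closed B -> ms_closed (A `|` B).
Proof. by rewrite /ms_closed setCU; apply: ms_open_setI. Qed.

Lemma ms_closed0 : ms_closed (@set0 X). Proof. by rewrite /ms_closed setC0; exact: ms_openT. Qed.

Definition ms_closure (A : set X) : set X :=
  [set z | forall d, 0 < d -> exists2 x, A x & ms_dist x z < d].

Lemma ms_closure_closed A : ms_closed (ms_closure A).
Proof.
move=> z /= nz.
have [d d0 hd] : exists2 d, 0 < d & forall x, A x -> d <= ms_dist x z.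
  apply: contrapT => hn; apply: nz => d d0; apply: contrapT => hn2; apply: hn.
  exists d => // x Ax; rewrite leNgt; apply/negP => hlt; apply: hn2; by exists x.
exists d => // y; rewrite /ms_ball /= => hy cy; have [|x' Ax' hx'] := cy (d - ms_dist z y).
  by rewrite subr_gt0.
have := hd _ Ax'; have := ms_dist_tri x' y z; rewrite (ms_dist_sym y z); lra.
Qed.

Lemma ms_sub_closure A : A `<=` ms_closure A.
Proof. by move=> x Ax d d0; exists x => //; rewrite ms_dist_xx. Qed.

Lemma ms_nbhd_closure A e : ms_nbhd (ms_closure A) e `<=` ms_nbhd A e.
Proof.
move=> z [y cy hyz]; have [|x Ax hx] := cy (e - ms_dist y z); first by rewrite subr_gt0.
exists x => //; have := ms_dist_tri x y z; lra.
Qed.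

Lemma ms_closed_closure A : ms_closed A -> ms_closure A `<=` A.
Proof.
move=> cA z cz; apply: contrapT => nAz; have [d d0 hd] := cA z nAz.
have [x Ax hx] := cz d d0; apply: (hd x) => //.
by rewrite /ms_ball /= ms_dist_sym.
Qed.

End metric_basics.


Section borel.
Context {R : realType} {X : metric_space R}.
Local Notation B := (@ms_borel R X).

Lemma borel0 : B set0. Proof. exact: sigma_algebra0. Qed.
Lemma borelC {A} : B A -> B (~` A).
Proof. by rewrite -setTD; exact: sigma_algebraCD. Qed.
Lemma borelT : B setT. Proof. by rewrite -setC0; apply: borelC; exact: borel0. Qed.
Lemma borel_bigcup {F : nat -> set X} : (forall n, B (F n)) -> B (\bigcup_n F n).
Proof. exact: sigma_algebra_bigcup. Qed.
Lemma borelU {A C} : B A -> B C -> B (A `|` C).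
Proof.
by move=> hA hC; rewrite -bigcup2E; apply: borel_bigcup => -[|[|n]] //=; exact: borel0.
Qed.
Lemma borelI {A C} : B A -> B C -> B (A `&` C).
Proof.
move=> hA hC; rewrite -(setCK (A `&` C)) setCI; apply: borelC; apply: borelU; exact: borelC.
Qed.
Lemma borelD {A C} : B A -> B C -> B (A `\` C).
Proof. by move=> hA hC; rewrite setDE; apply: borelI => //; exact: borelC. Qed.
Lemma open_borel {A} : ms_open A -> B A.
Proof. by move=> oA; exact: sub_sigma_algebra. Qed.
Lemma closed_borel {A} : ms_closed A -> B A.
Proof. by move=> cA; rewrite -(setCK A); apply: borelC; exact: open_borel. Qed.
End borel.

Section measure_basics.
Context {R : realType} {X : metric_space R} {mu : set X -> R}
  (hmu : finite_borel_measure mu).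
Local Notation B := (@ms_borel R X).

Lemma mu0 : mu set0 = 0. Proof. by case: hmu. Qed.
Lemma mu_ge0 {A} : B A -> 0 <= mu A. Proof. by case: hmu => _ h _; exact: h. Qed.
Lemma mu_sigma {F : nat -> set X} : (forall n, B (F n)) -> trivIset setT F ->
  (fun n => \sum_(0 <= k < n) mu (F k)) @ \oo --> mu (\bigcup_k F k).
Proof. by case: hmu => _ _ h; exact: h. Qed.

Lemma mu_add {A C} : B A -> B C -> A `&` C = set0 -> mu (A `|` C) = mu A + mu C.
Proof.
move=> hA hC hAC.
have hB : forall n, B (bigcup2 A C n) by move=> [|[|n]] //=; exact: borel0.
have h1 := mu_sigma hB (eq_ind _ id hAC _ (trivIset_bigcup2 A C)).
rewrite bigcup2E in h1.
have h2 : (fun n => \sum_(0 <= k < n) mu (bigcup2 A C k)) @ \oo --> mu A + mu C.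
  apply: cvg_near_cst; exists 2%N => // n /= hn.
  rewrite (big_cat_nat _ hn) //= big_nat_recr //= big_nat1 /=.
  rewrite big_nat_cond big1 ?addr0 // => k /andP [/andP [hk _] _].
  by case: k hk => [|[|k]] //= _; rewrite mu0.
exact: (cvg_unique _ h1 h2).
Qed.

Lemma mu_mono {A C} : B A -> B C -> A `<=` C -> mu A <= mu C.
Proof.
move=> hA hC AC; have -> : C = A `|` (C `\` A).
  by rewrite setDUK.
rewrite mu_add //; last by rewrite setDE setICA setICr setI0.
  by rewrite lerDl mu_ge0 //; exact: borelD.
by apply: borelD.
Qed.

Lemma mu_setC {A} : B A -> mu (~` A) = mu setT - mu A.
Proof.
move=> hA; rewrite -(setUv A) mu_add ?setICr //; first by lra.
exact: borelC.
Qed.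

Lemma mu_le_T {A} : B A -> mu A <= mu setT.
Proof. by move=> hA; apply: mu_mono => //; exact: borelT. Qed.

Lemma mu_cont_below {A : nat -> set X} : (forall n, B (A n)) ->
  (forall n, A n `<=` A n.+1) -> (fun n => mu (A n)) @ \oo --> mu (\bigcup_n A n).
Proof.
move=> hA inc.
have nd : nondecreasing_seq A.
  by apply/nondecreasing_seqP => n; apply/subsetPset; exact: inc.
have hD : forall n, B (seqD A n) by case=> [|n] //=; exact: borelD.
have h := mu_sigma hD (trivIset_seqD nd); rewrite eq_bigcup_seqD in h.
have eq : forall n, \sum_(0 <= k < n.+1) mu (seqD A k) = mu (A n).
  elim=> [|n ih]; first by rewrite big_nat1.
  rewrite big_nat_recr //= ih [in RHS](setU_seqD nd) mu_add //=.
    exact: borelD.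
  by rewrite setDE setICA setICr setI0.
have e2 : (fun n => mu (A n)) = (fun n => \sum_(0 <= k < n.+1) mu (seqD A k)).
  by apply: funext => n; rewrite eq.
rewrite e2; move: h; rewrite -cvg_shiftS; exact.
Qed.

Lemma mu_cont_above {A : nat -> set X} : (forall n, B (A n)) ->
  (forall n, A n.+1 `<=` A n) -> (fun n => mu (A n)) @ \oo --> mu (\bigcap_n A n).
Proof.
move=> hA dec.
have h := @mu_cont_below (fun n => ~` A n) (fun n => borelC (hA n)) (fun n => subsetC (dec n)).
rewrite -setC_bigcap in h.
have hI : B (\bigcap_n A n).
  by rewrite -(setCK (\bigcap_n A n)) setC_bigcap; apply: borelC; apply: borel_bigcup => n; exact: borelC.
have h2 := cvgB (cvg_cst (mu setT)) h.
have e1 : mu setT - mu (~` \bigcap_n A n) = mu (\bigcap_n A n) by rewrite mu_setC //; lra.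
rewrite e1 in h2.
rewrite (_ : (fun n => mu (A n)) = (cst (mu setT) - (fun n => mu (~` A n)))%R); first exact: h2.
apply: funext => n /=.
change (mu (A n) = mu setT - mu (~` A n)); rewrite mu_setC //; lra.
Qed.

Lemma mu_subadd {C : nat -> set X} {S : R} : (forall n, B (C n)) ->
  (forall n, \sum_(0 <= k < n) mu (C k) <= S) -> mu (\bigcup_n C n) <= S.
Proof.
move=> hC hS.
have hD : forall n, B (seqDU C n).
  move=> n; apply: borelD => //; apply: (big_ind (fun S => B S)) => //.
    exact: borel0.
  by move=> *; exact: borelU.
have h := mu_sigma hD (trivIset_seqDU C); rewrite -seqDU_bigcup_eq in h.
rewrite -(cvg_lim _ h) //; apply: limr_le; first exact: cvgP h.
near=> n; apply: le_trans (hS n); apply: ler_sum => k _.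
apply: mu_mono => //; exact: subset_seqDU.
Unshelve. all: by end_near.
Qed.

End measure_basics.


Section real_helpers.
Context {R : realType}.

Lemma cvg_ev {u : nat -> R} {l e} : u @ \oo --> l -> 0 < e ->
  exists N, forall n, (N <= n)%N -> l - e < u n < l + e.
Proof.
move=> /cvgrPdist_lt h e0; have [N _ hN] := h e e0.
by exists N => n hn; rewrite -ltr_distlC; exact: hN.
Qed.

Lemma exists_inv_lt {e : R} : 0 < e -> exists k : nat, k.+1%:R^-1 < e.
Proof.
move=> e0; have [N _ /(_ N)/(_ (leqnn _)) h] := near_infty_natSinv_lt (PosNum e0).
by exists N.
Qed.

Lemma geom_sum n : \sum_(0 <= k < n) (2 ^+ k.+1)^-1 <= (1 : R).
Proof.
suff : \sum_(0 <= k < n) (2 ^+ k.+1)^-1 = 1 - (2 ^+ n)^-1 :> R.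
  by move=> ->; rewrite lerBlDr lerDl invr_ge0 exprn_ge0.
elim: n => [|n ih]; first by rewrite big_geq // expr0 invr1 subrr.
rewrite big_nat_recr //= ih exprS invfM.
have : 0 < (2 ^+ n : R)^-1 by rewrite invr_gt0 exprn_gt0.
move: ((2 ^+ n : R)^-1) => x x0; lra.
Qed.
End real_helpers.

Section regularity.
Context {R : realType} {X : metric_space R} {mu : set X -> R}
  (hmu : finite_borel_measure mu).
Local Notation B := (@ms_borel R X).

Definition regular_set (A : set X) := B A /\ forall e, 0 < e ->
  exists F O, [/\ ms_closed F, ms_open O, F `<=` A, A `<=` O & mu O <= mu F + e].

Lemma reg_closed F : ms_closed F -> regular_set F.
Proof.
move=> cF; split; first exact: closed_borel.
move=> e e0; pose O k := ms_nbhd F (k.+1%:R^-1).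
have hO : forall k, B (O k) by move=> k; apply: open_borel; exact: ms_nbhd_open.
have dec : forall k, O k.+1 `<=` O k.
  move=> k z [x Fx h]; exists x => //; apply: lt_le_trans h _.
  by rewrite lef_pV2 ?posrE // ler_nat.
have eqI : \bigcap_k O k = F.
  apply/seteqP; split; last first.
    by move=> x Fx k _; exists x => //; rewrite ms_dist_xx invr_gt0.
  move=> z hz; apply: (ms_closed_closure _ cF) => d d0.
  have [k hk] := exists_inv_lt d0; have [x Fx hx] := hz k I.
  by exists x => //; apply: lt_trans hx hk.
have := mu_cont_above hmu hO dec; rewrite eqI => h.
have [N hN] := cvg_ev h e0; have /andP [_ h2] := hN N (leqnn N).
exists F, (O N); split => //.
- exact: ms_nbhd_open.
- by move=> x Fx; exists x => //; rewrite ms_dist_xx invr_gt0.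
- exact: ltW.
Qed.

Lemma reg_C A : regular_set A -> regular_set (~` A).
Proof.
move=> [hA h]; split; first exact: borelC.
move=> e e0; have [F [Op [cF oO FA AO hFO]]] := h e e0.
exists (~` Op), (~` F); split.
- by rewrite /ms_closed setCK.
- exact: cF.
- by apply: subsetC.
- by apply: subsetC.
- rewrite !(mu_setC hmu); first lra.
  + exact: open_borel.
  + exact: closed_borel.
Qed.

Lemma reg_bigcup (A : nat -> set X) : (forall n, regular_set (A n)) ->
  regular_set (\bigcup_n A n).
Proof.
move=> hA; split; first by apply: borel_bigcup => n; case: (hA n).
move=> e e0; pose d k : R := e / 2 * (2 ^+ k.+1)^-1.
have d0 : forall k, 0 < d k.
  by move=> k; rewrite /d mulr_gt0 ?divr_gt0 // invr_gt0 exprn_gt0.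
have : forall k, exists FO : set X * set X, [/\ ms_closed FO.1, ms_open FO.2,
    FO.1 `<=` A k, A k `<=` FO.2 & mu FO.2 <= mu FO.1 + d k].
  move=> k; have [_ /(_ _ (d0 k)) [F [Op H]]] := hA k; by exists (F, Op).
move=> /choice [FO hFO].
pose F k := (FO k).1; pose O k := (FO k).2.
have cF : forall k, ms_closed (F k) by move=> k; case: (hFO k).
have oO : forall k, ms_open (O k) by move=> k; case: (hFO k).
have FA : forall k, F k `<=` A k by move=> k; case: (hFO k).
have AO : forall k, A k `<=` O k by move=> k; case: (hFO k).
have hm : forall k, mu (O k) <= mu (F k) + d k by move=> k; case: (hFO k).
pose G N := \bigcup_(k < N) F k.
have cG : forall N, ms_closed (G N).
  move=> N; rewrite /G bigcup_mkord; apply: (big_ind (fun S => ms_closed S)).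
  - exact: ms_closed0.
  - by move=> *; exact: ms_closed_setU.
  - by move=> i _; exact: cF.
have incG : forall N, G N `<=` G N.+1.
  by move=> N x [k /= hk Fx]; exists k => //=; apply: ltnW.
have hGB : forall N, B (G N) by move=> N; exact: closed_borel.
have eqG : \bigcup_N G N = \bigcup_k F k.
  apply/seteqP; split; first by move=> x [N _ [k _ Fx]]; exists k.
  by move=> x [k _ Fx]; exists k.+1 => //; exists k => //=.
have h := mu_cont_below hmu hGB incG; rewrite eqG in h.
have [N hN] := cvg_ev h (divr_gt0 e0 (ltr0n _ 2)).
have /andP [hN1 _] := hN N (leqnn N).
exists (G N), (\bigcup_k O k); split.
- exact: cG.
- exact: ms_open_bigcup.
- by move=> x [k /= _ Fx]; exists k => //; exact: FA.
- by move=> x [k _ Ax]; exists k => //; exact: AO.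
have hFu : B (\bigcup_k F k) by apply: borel_bigcup => k; exact: closed_borel.
have hOu : B (\bigcup_k O k) by apply: borel_bigcup => k; exact: open_borel.
have hD : forall k, B (O k `\` F k).
  by move=> k; apply: borelD; [exact: open_borel | exact: closed_borel].
have FO' : \bigcup_k F k `<=` \bigcup_k O k.
  by move=> x [k _ Fx]; exists k => //; apply: AO; apply: FA.
have split1 : mu (\bigcup_k O k) = mu (\bigcup_k F k) + mu (\bigcup_k O k `\` \bigcup_k F k).
  rewrite -(mu_add hmu) //; first by rewrite setDUK.
  - exact: borelD.
  - by rewrite setDE setICA setICr setI0.
have sub1 : \bigcup_k O k `\` \bigcup_k F k `<=` \bigcup_k (O k `\` F k).
  move=> x [[k _ Ox] nF]; exists k => //; split => // Fx; apply: nF; by exists k.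
have bnd : mu (\bigcup_k (O k `\` F k)) <= e / 2.
  apply: (mu_subadd hmu) => // n.
  apply: (@le_trans _ _ (\sum_(0 <= k < n) d k)).
    apply: ler_sum => k _.
    have : mu (O k) = mu (F k) + mu (O k `\` F k).
      rewrite -(mu_add hmu) ?setDUK //; first by apply: subset_trans (FA k) (AO k).
      - exact: closed_borel.
      - by rewrite setDE setICA setICr setI0.
    have := hm k; lra.
  rewrite /d -mulr_sumr; have := geom_sum (R := R) n.
  have : 0 < e / 2 by rewrite divr_gt0.
  move: (e / 2) (\sum_(0 <= k < n) (2 ^+ k.+1)^-1) => a b a0 hb.
  by rewrite ger_pMr.
have hm2 := mu_mono hmu (borelD hOu hFu) (borel_bigcup hD) sub1.
lra.
Qed.

Lemma borel_regular {A} : B A -> regular_set A.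
Proof.
suff : B `<=` regular_set by apply.
apply: smallest_sub.
  split.
  - by apply: reg_closed; exact: ms_closed0.
  - by move=> S hS; rewrite setTD; exact: reg_C.
  - exact: reg_bigcup.
move=> O oO; rewrite -(setCK O); apply: reg_C; apply: reg_closed.
by rewrite /ms_closed setCK.
Qed.

Lemma inner_regular A e : B A -> 0 < e ->
  exists2 F, ms_closed F /\ F `<=` A & mu A <= mu F + e.
Proof.
move=> hA e0; have [_ /(_ e e0) [F [Op [cF oO FA AO h]]]] := borel_regular hA.
exists F => //; apply: le_trans h; apply: (mu_mono hmu) => //; exact: open_borel.
Qed.

End regularity.


Section compact_stuff.
Context {R : realType}.

Definition lip1 {X Y : metric_space R} (f : X -> Y) :=
  forall x y, ms_dist (f x) (f y) <= ms_dist x y.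

Lemma iso_lip1 {X Y : metric_space R} {f : X -> Y} : isometric_embedding f -> lip1 f.
Proof. by move=> h x y; rewrite h. Qed.

Lemma lip1_open {X Y : metric_space R} {f : X -> Y} {O} : lip1 f -> ms_open O ->
  ms_open (f @^-1` O).
Proof.
move=> hf oO x Ox; have [e e0 he] := oO _ Ox; exists e => // y hy; apply: he.
rewrite /ms_ball /=; apply: le_lt_trans (hf x y) _; exact: hy.
Qed.

Lemma lip1_closed {X Y : metric_space R} {f : X -> Y} {F} : lip1 f -> ms_closed F ->
  ms_closed (f @^-1` F).
Proof.
move=> hf cF; rewrite /ms_closed (_ : ~` (f @^-1` F) = f @^-1` (~` F)) //.
exact: lip1_open.
Qed.

Lemma lip1_borel {X Y : metric_space R} {f : X -> Y} {A} : lip1 f -> ms_borel A ->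
  ms_borel (f @^-1` A).
Proof.
move=> hf; move: A; suff : @ms_borel R Y `<=` [set A | ms_borel (f @^-1` A)] by apply.
apply: smallest_sub.
  split => /=.
  - by rewrite preimage_set0; exact: borel0.
  - by move=> A hA; rewrite setTD preimage_setC; exact: borelC.
  - by move=> A hA; rewrite preimage_bigcup; exact: borel_bigcup.
by move=> O oO /=; apply: open_borel; exact: lip1_open.
Qed.

Lemma filter_seq_all (U : set_system nat) (FU : Filter U) {T : eqType}
  (P : T -> set nat) (s : seq T) :
  (forall S, S \in s -> U (P S)) -> U [set n | forall S, S \in s -> P S n].
Proof.
elim: s => [|a l ih] h.
  by apply: filterS filterT => n _ S; rewrite in_nil.
have ha := h a (mem_head a l).
have hl := ih (fun S hS => h S (introT orP (or_intror hS))).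
apply: filterS (filterI ha hl) => n [Pa Pl] S; rewrite in_cons => /orP [/eqP -> //|].
exact: Pl.
Qed.

Lemma ulimit_exists {X : metric_space R} (cX : ms_compact X) {U : set_system nat}
  (hU : UltraFilter U) (s : nat -> X) :
  exists x, forall d, 0 < d -> U [set n | ms_dist x (s n) < d].
Proof.
apply: contrapT => hn.
have hx : forall x, exists2 d, 0 < d & ~ U [set n | ms_dist x (s n) < d].
  move=> x; apply: contrapT => hx; apply: hn; exists x => d d0.
  apply: contrapT => hd; apply: hx; by exists d.
pose C := [set S : set X | exists x d, [/\ 0 < d, ~ U [set n | ms_dist x (s n) < d]
  & S = ms_ball x d]].
have hC1 : forall S, C S -> ms_open S.
  by move=> S [x [d [_ _ ->]]]; exact: ms_ball_open.
have hC2 : forall x, exists2 S, C S & S x.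
  move=> x; have [d d0 hd] := hx x; exists (ms_ball x d).
    by exists x, d.
  by rewrite /ms_ball /= ms_dist_xx.
have [s0 [s0C s0cov]] := cX C hC1 hC2.
have : U [set n | forall S, S \in s0 -> ~ S (s n)].
  apply: filter_seq_all => S /s0C [x [d [d0 nU ->]]].
  have [//|] := in_ultra_setVsetC [set n | ms_dist x (s n) < d] hU.
  by move=> Uc; apply: filterS Uc.
move=> /filter_ex [n hn2]; have [S S0 Sn] := s0cov (s n).
exact: hn2 S S0 Sn.
Qed.

Lemma ms_compact_bounded {X : metric_space R} (cX : ms_compact X) (p : X) :
  exists K : R, forall x, ms_dist p x < K.
Proof.
pose C := [set S : set X | exists k : nat, S = ms_ball p k%:R].
have hC1 : forall S, C S -> ms_open S.
  by move=> S [k ->]; exact: ms_ball_open.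
have hC2 : forall x, exists2 S, C S & S x.
  move=> x; have [k hk] : exists k : nat, ms_dist p x < k%:R.
    exists (Num.truncn (ms_dist p x)).+1; exact: truncnS_gt.
  by exists (ms_ball p k%:R) => //; exists k.
have [s0 [s0C s0cov]] := cX C hC1 hC2.
suff [K hK] : exists K : R, forall S x, S \in s0 -> S x -> ms_dist p x < K.
  exists K => x; have [S S0 Sx] := s0cov x; exact: hK S x S0 Sx.
elim: s0 s0C {s0cov} => [|a l ih] hC.
  by exists 0 => S x; rewrite in_nil.
have [k ak] := hC a (mem_head a l).
have [K hK] := ih (fun S hS => hC S (introT orP (or_intror hS))).
exists (Num.max k%:R K) => S x; rewrite in_cons => /orP [/eqP -> |hS Sx].
  by rewrite ak /ms_ball /= => h; rewrite lt_max h.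
by rewrite lt_max (hK S x hS Sx) orbT.
Qed.

End compact_stuff.

Lemma filter3 {T : Type} {U : set_system T} (PU : ProperFilter U) {P Q S : set T} :
  U P -> U Q -> U S -> exists n, [/\ P n, Q n & S n].
Proof.
move=> hP hQ hS; have : U (P `&` (Q `&` S)) by apply: filterI => //; apply: filterI.
by move=> /filter_ex [n [? [? ?]]]; exists n.
Qed.


Section sum_space.
Context {R : realType} (X Y : metric_space R) (x0 : X) (y0 : Y).

Definition sum_dist (a b : (X + Y)%type) : R :=
  match a, b with
  | inl x, inl x' => ms_dist x x'
  | inr y, inr y' => ms_dist y y'
  | inl x, inr y => ms_dist x x0 + 1 + ms_dist y0 y
  | inr y, inl x => ms_dist x x0 + 1 + ms_dist y0 y
  end.

Lemma sum_dist_eq0 a b : sum_dist a b = 0 <-> a = b.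
Proof.
case: a b => [x|y] [x'|y'] /=.
- by split => [/ms_dist_eq0 -> // | [] <-]; apply/ms_dist_eq0.
- split => // h; exfalso; have := ms_dist_ge0 x x0; have := ms_dist_ge0 y0 y'; lra.
- split => // h; exfalso; have := ms_dist_ge0 x' x0; have := ms_dist_ge0 y0 y; lra.
- by split => [/ms_dist_eq0 -> // | [] <-]; apply/ms_dist_eq0.
Qed.

Lemma sum_dist_sym a b : sum_dist a b = sum_dist b a.
Proof. by case: a b => [x|y] [x'|y'] //=; rewrite ms_dist_sym. Qed.

Lemma sum_dist_tri a b c : sum_dist a c <= sum_dist a b + sum_dist b c.
Proof.
case: a b c => [x|y] [x'|y'] [x''|y''] /=; try exact: ms_dist_tri.
- have := ms_dist_tri x x' x0; have := ms_dist_ge0 y0 y''; lra.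
- have := ms_dist_tri x x0 x''; rewrite (ms_dist_sym x0 x'').
  have := ms_dist_ge0 y0 y'; lra.
- have := ms_dist_tri y0 y' y''; lra.
- have := ms_dist_tri x'' x' x0; rewrite (ms_dist_sym x'' x'); lra.
- have := ms_dist_tri y y0 y''; rewrite (ms_dist_sym y y0).
  have := ms_dist_ge0 x' x0; lra.
- have := ms_dist_tri y0 y' y; rewrite (ms_dist_sym y' y); lra.
Qed.

Definition sum_space : metric_space R :=
  MetricSpace sum_dist_eq0 sum_dist_sym sum_dist_tri.

End sum_space.

Section witness.
Context {R : realType}.

Lemma nbhd_mono {Z : metric_space R} (A : set Z) {e1 e2} : e1 <= e2 ->
  ms_nbhd A e1 `<=` ms_nbhd A e2.
Proof. by move=> h z [x Ax hx]; exists x => //; apply: lt_le_trans h. Qed.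

Lemma hausdorff_ne {X Y : cmm_space R} {Z : metric_space R} {f : X -> Z} {g : Y -> Z} :
  isometric_embedding f -> isometric_embedding g ->
  [set e : R | 0 < e /\ f @` setT `<=` ms_nbhd (g @` setT) e /\
                        g @` setT `<=` ms_nbhd (f @` setT) e] !=set0.
Proof.
move=> hf hg; pose p := cmm_point X; pose q := cmm_point Y.
have [KX hKX] := ms_compact_bounded (@cmm_compact _ X) p.
have [KY hKY] := ms_compact_bounded (@cmm_compact _ Y) q.
have KX0 := hKX p; have KY0 := hKY q; rewrite ms_dist_xx in KX0; rewrite ms_dist_xx in KY0.
have c0 := ms_dist_ge0 (f p) (g q).
exists (ms_dist (f p) (g q) + KX + KY + 1); split; first lra.
split.
- move=> _ [x _ <-]; exists (g q); first by exists q.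
  have := ms_dist_tri (g q) (f p) (f x); rewrite hf (ms_dist_sym (g q) (f p)).
  have := hKX x; lra.
- move=> _ [y _ <-]; exists (f p); first by exists p.
  have := ms_dist_tri (f p) (g q) (g y); rewrite hg.
  have := hKY y; lra.
Qed.

Lemma prokhorov_ne {X Y : cmm_space R} {Z : metric_space R} {f : X -> Z} {g : Y -> Z} :
  isometric_embedding f -> isometric_embedding g ->
  [set e : R | 0 < e /\ forall F, ms_closed F ->
     @cmm_mu _ X (f @^-1` F) <= @cmm_mu _ Y (g @^-1` ms_nbhd F e) + e /\
     @cmm_mu _ Y (g @^-1` F) <= @cmm_mu _ X (f @^-1` ms_nbhd F e) + e] !=set0.
Proof.
move=> hf hg; have mX := @cmm_measure _ X; have mY := @cmm_measure _ Y.
have TX := mu_ge0 mX (@borelT _ X); have TY := mu_ge0 mY (@borelT _ Y).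
exists (@cmm_mu _ X setT + @cmm_mu _ Y setT + 1); split; first lra.
move=> F cF; set e := (@cmm_mu _ X setT + @cmm_mu _ Y setT + 1).
have h1 := mu_le_T mX (closed_borel (lip1_closed (iso_lip1 hf) cF)).
have h2 := mu_le_T mY (closed_borel (lip1_closed (iso_lip1 hg) cF)).
have h3 := mu_ge0 mY (open_borel (lip1_open (iso_lip1 hg) (ms_nbhd_open F e))).
have h4 := mu_ge0 mX (open_borel (lip1_open (iso_lip1 hf) (ms_nbhd_open F e))).
split; rewrite /e; lra.
Qed.

Lemma ghp_witness {X Y : cmm_space R} {e} : d_GHP X Y < e ->
  exists (Z : metric_space R) (f : X -> Z) (g : Y -> Z),
  [/\ isometric_embedding f, isometric_embedding g,
      (forall x, exists y, ms_dist (g y) (f x) < e),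
      (forall y, exists x, ms_dist (f x) (g y) < e) &
      forall F : set Z, ms_closed F ->
        @cmm_mu _ X (f @^-1` F) <= @cmm_mu _ Y (g @^-1` ms_nbhd F e) + e /\
        @cmm_mu _ Y (g @^-1` F) <= @cmm_mu _ X (f @^-1` ms_nbhd F e) + e].
Proof.
rewrite /d_GHP; set S := (X in inf X < e) => hd.
have hne : S !=set0.
  pose Z0 := sum_space X Y (cmm_point X) (cmm_point Y).
  eexists; exists Z0, (@inl X Y : X -> Z0), (@inr X Y : Y -> Z0); split => //.
have [_ [Z [f [g [hf hg ->]]]] hlt] := inf_lt hne hd.
have [H0 [H1 [H2 H3]]] := hausdorff_ne hf hg.
have [P0 [P1 P2]] := prokhorov_ne hf hg.
have Hge : 0 <= hausdorff_dist (f @` setT) (g @` setT).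
  apply: lb_le_inf; first by exists H0; split.
  by move=> y [y0 _]; exact: ltW.
have Pge : 0 <= prokhorov_dist (fun B => @cmm_mu _ X (f @^-1` B))
                                (fun B => @cmm_mu _ Y (g @^-1` B)).
  apply: lb_le_inf; first by exists P0; split.
  by move=> y [y0 _]; exact: ltW.
have [e1 [e10 [he1 he1']] e1e] : exists2 e1, (0 < e1 /\ f @` setT `<=` ms_nbhd (g @` setT) e1 /\
    g @` setT `<=` ms_nbhd (f @` setT) e1) & e1 < e.
  apply: inf_lt; first by exists H0; split.
  move: hlt; rewrite /hausdorff_dist; lra.
have [e2 [e20 he2] e2e] : exists2 e2, (0 < e2 /\ forall F, ms_closed F ->
     @cmm_mu _ X (f @^-1` F) <= @cmm_mu _ Y (g @^-1` ms_nbhd F e2) + e2 /\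
     @cmm_mu _ Y (g @^-1` F) <= @cmm_mu _ X (f @^-1` ms_nbhd F e2) + e2) & e2 < e.
  apply: inf_lt; first by exists P0; split.
  move: hlt; rewrite /prokhorov_dist; lra.
exists Z, f, g; split => //.
- move=> x; have [_ [y _ <-] hy] := he1 (f x) (ex_intro2 _ _ x I erefl).
  by exists y; apply: lt_trans e1e.
- move=> y; have [_ [x _ <-] hx] := he1' (g y) (ex_intro2 _ _ y I erefl).
  by exists x; apply: lt_trans e1e.
move=> F cF; have [h1 h2] := he2 F cF.
have mX := @cmm_measure _ X; have mY := @cmm_measure _ Y.
have oY := open_borel (lip1_open (iso_lip1 hg) (ms_nbhd_open F e)).
have oY2 := open_borel (lip1_open (iso_lip1 hg) (ms_nbhd_open F e2)).
have oX := open_borel (lip1_open (iso_lip1 hf) (ms_nbhd_open F e)).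
have oX2 := open_borel (lip1_open (iso_lip1 hf) (ms_nbhd_open F e2)).
have m1 := mu_mono mY oY2 oY (preimage_subset (nbhd_mono F (ltW e2e))).
have m2 := mu_mono mX oX2 oX (preimage_subset (nbhd_mono F (ltW e2e))).
split; lra.
Qed.

End witness.


Section main.
Context {R : realType} (A B : nat -> cmm_space R) (Ai Bi : cmm_space R).
Variable phi : forall n, B n -> A n.
Hypothesis phis : forall n (x : A n), exists x', phi n x' = x.
Hypothesis phil : forall n, lip1 (phi n).
Hypothesis phim : forall n (S : set (A n)), ms_borel S ->
  @cmm_mu _ (A n) S <= @cmm_mu _ (B n) (phi n @^-1` S).
Variable eps : nat -> R.
Hypothesis eps0 : forall n, 0 < eps n.
Hypothesis epsc : eps @ \oo --> 0.
Variable Z : nat -> metric_space R.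
Variable f : forall n, A n -> Z n.
Variable g : forall n, Ai -> Z n.
Hypothesis hf : forall n, isometric_embedding (f n).
Hypothesis hg : forall n, isometric_embedding (@g n).
Hypothesis H1 : forall n x, exists y, ms_dist (g n y) (f n x) < eps n.
Hypothesis H2 : forall n y, exists x, ms_dist (f n x) (g n y) < eps n.
Hypothesis HP : forall n (F : set (Z n)), ms_closed F ->
  @cmm_mu _ (A n) (f n @^-1` F) <= @cmm_mu _ Ai (g n @^-1` ms_nbhd F (eps n)) + eps n /\
  @cmm_mu _ Ai (g n @^-1` F) <= @cmm_mu _ (A n) (f n @^-1` ms_nbhd F (eps n)) + eps n.
Variable Z' : nat -> metric_space R.
Variable f' : forall n, B n -> Z' n.
Variable g' : forall n, Bi -> Z' n.
Hypothesis hf' : forall n, isometric_embedding (f' n).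
Hypothesis hg' : forall n, isometric_embedding (@g' n).
Hypothesis H1' : forall n x, exists y, ms_dist (g' n y) (f' n x) < eps n.
Hypothesis H2' : forall n y, exists x, ms_dist (f' n x) (g' n y) < eps n.
Hypothesis HP' : forall n (F : set (Z' n)), ms_closed F ->
  @cmm_mu _ (B n) (f' n @^-1` F) <= @cmm_mu _ Bi (g' n @^-1` ms_nbhd F (eps n)) + eps n /\
  @cmm_mu _ Bi (g' n @^-1` F) <= @cmm_mu _ (B n) (f' n @^-1` ms_nbhd F (eps n)) + eps n.

Lemma main_le : ghp_le Ai Bi.
Proof.
have hex : forall n, exists p : Bi -> Ai, forall a, exists x' : B n,
      ms_dist (g' n a) (f' n x') < eps n /\ ms_dist (f n (phi n x')) (g n (p a)) < eps n.
  move=> n.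
  have hex2 : forall a, exists y : Ai, exists x' : B n,
      ms_dist (g' n a) (f' n x') < eps n /\ ms_dist (f n (phi n x')) (g n y) < eps n.
    move=> a; have [x' hx'] := H2' n a.
    have [y hy] := H1 n (phi n x'); exists y, x'; split.
      by rewrite ms_dist_sym.
    by rewrite ms_dist_sym.
  have [p hp] := choice hex2; by exists p.
have [psi hpsi] := choice hex.
have psil : forall n a b, ms_dist (psi n a) (psi n b) <= ms_dist a b + 4 * eps n.
  move=> n a b; have [xa [ha1 ha2]] := hpsi n a; have [xb [hb1 hb2]] := hpsi n b.
  have e1 : ms_dist (psi n a) (psi n b) = ms_dist (g n (psi n a)) (g n (psi n b)) by rewrite hg.
  have t1 := ms_dist_tri (g n (psi n a)) (f n (phi n xa)) (g n (psi n b)).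
  have t2 := ms_dist_tri (f n (phi n xa)) (f n (phi n xb)) (g n (psi n b)).
  have t3 : ms_dist (f n (phi n xa)) (f n (phi n xb)) <= ms_dist xa xb by rewrite hf; exact: phil.
  have t4 : ms_dist xa xb = ms_dist (f' n xa) (f' n xb) by rewrite hf'.
  have t5 := ms_dist_tri (f' n xa) (g' n a) (f' n xb).
  have t6 := ms_dist_tri (g' n a) (g' n b) (f' n xb).
  have t7 : ms_dist (g' n a) (g' n b) = ms_dist a b by rewrite hg'.
  have s1 := ms_dist_sym (g n (psi n a)) (f n (phi n xa)).
  have s2 := ms_dist_sym (f' n xa) (g' n a).
  have s3 := ms_dist_sym (f' n xb) (g' n b).
  lra.
have [U [hU sU]] := ultraFilterLemma (@eventually_filter).
have PU : ProperFilter U := @ultra_proper _ _ hU.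
have epsU : forall c, 0 < c -> U [set n | eps n < c].
  move=> c c0; apply: sU; have [N hN] := cvg_ev epsc c0.
  by exists N => // n /= hn; have /andP [_] := hN n hn; rewrite add0r.
have hexP : forall a, exists y : Ai, forall d, 0 < d ->
    U [set n | ms_dist y (psi n a) < d].
  move=> a; have := @ulimit_exists _ Ai (@cmm_compact _ Ai) U hU (fun n => psi n a); exact.
have [Phi hPhi] := choice hexP.
have Phil : lip1 Phi.
  move=> a b; apply/ler_addgt0Pr => d d0.
  have [n [h1 h2 h3]] := filter3 PU (hPhi a (d / 3) (divr_gt0 d0 (ltr0n _ 3)))
    (hPhi b (d / 3) (divr_gt0 d0 (ltr0n _ 3))) (epsU (d / 12) (divr_gt0 d0 (ltr0n _ 12))).
  rewrite /= in h1 h2 h3.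
  have := psil n a b; have := ms_dist_tri (Phi a) (psi n a) (Phi b).
  have := ms_dist_tri (psi n a) (psi n b) (Phi b).
  have := ms_dist_sym (psi n b) (Phi b); lra.
have unif : forall d, 0 < d -> U [set n | forall a, ms_dist (Phi a) (psi n a) < d].
  move=> d d0; have d4 : 0 < d / 4 by rewrite divr_gt0.
  pose C := [set S : set Bi | exists b, S = ms_ball b (d / 4)].
  have hC1 : forall S, C S -> ms_open S by move=> S [b ->]; exact: ms_ball_open.
  have hC2 : forall a, exists2 S, C S & S a.
    by move=> a; exists (ms_ball a (d / 4)); [exists a | rewrite /ms_ball /= ms_dist_xx].
  have [s0 [s0C s0cov]] := @cmm_compact _ Bi C hC1 hC2.
  have hall : U [set n | forall S, S \in s0 -> exists b, S = ms_ball b (d / 4) /\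
      ms_dist (Phi b) (psi n b) < d / 4].
    apply: filter_seq_all => S /s0C [b ->].
    by apply: filterS (hPhi b (d / 4) d4) => n hn; exists b; split.
  apply: filterS (filterI hall (epsU (d / 16) (divr_gt0 d0 (ltr0n _ 16)))) => n [hn he] a.
  have [S S0 Sa] := s0cov a; have [b [eS hb]] := hn S S0.
  rewrite eS /ms_ball /= in Sa; rewrite /= in he.
  have := Phil a b; have := ms_dist_sym a b; have := psil n b a.
  have := ms_dist_tri (Phi a) (Phi b) (psi n a).
  have := ms_dist_tri (Phi b) (psi n b) (psi n a); lra.
have surj : forall y : Ai, exists a, Phi a = y.
  move=> y.
  have hexa : forall n, exists a : Bi, ms_dist y (psi n a) < 4 * eps n.
    move=> n; have [x hx] := H2 n y; have [x' hx'] := phis n x; have [a ha] := H1' n x'.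
    have [x'' [h1 h2]] := hpsi n a.
    rewrite -hx' in hx.
    have := hf' n x' x''; have := ms_dist_tri (f' n x') (g' n a) (f' n x'').
    have := ms_dist_sym (f' n x') (g' n a); have := phil n x' x''.
    have := hf n (phi n x') (phi n x''); have := hg n y (psi n a).
    have := ms_dist_tri (g n y) (f n (phi n x')) (g n (psi n a)).
    have := ms_dist_tri (f n (phi n x')) (f n (phi n x'')) (g n (psi n a)).
    have := ms_dist_sym (g n y) (f n (phi n x')).
    move=> *; exists a; lra.
  have [an han] := choice hexa.
  have [a0 ha0] := @ulimit_exists _ Bi (@cmm_compact _ Bi) U hU an.
  exists a0; apply/ms_dist_eq0; apply/eqP; rewrite eq_le ms_dist_ge0 andbT.
  apply/ler_addgt0Pr => d d0; rewrite add0r.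
  have [n [h1 h2 h3]] := filter3 PU (hPhi a0 (d / 3) (divr_gt0 d0 (ltr0n _ 3)))
    (ha0 (d / 3) (divr_gt0 d0 (ltr0n _ 3))) (epsU (d / 30) (divr_gt0 d0 (ltr0n _ 30))).
  rewrite /= in h1 h2 h3.
  have := ms_dist_tri (Phi a0) (psi n a0) y.
  have := ms_dist_tri (psi n a0) (psi n (an n)) y.
  have := psil n a0 (an n); have := han n; have := ms_dist_sym y (psi n (an n)).
  lra.
have mAi := @cmm_measure _ Ai; have mBi := @cmm_measure _ Bi.
have closed_ineq : forall F : set Ai, ms_closed F ->
    @cmm_mu _ Ai F <= @cmm_mu _ Bi (Phi @^-1` F).
  move=> F cF.
  have step8a : forall n, exists2 V : set Bi, ms_open V /\
      V `<=` [set a | exists2 y, F y & ms_dist y (psi n a) < 4 * eps n] &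
      @cmm_mu _ Ai F <= @cmm_mu _ Bi V + 2 * eps n.
    move=> n.
    pose K := ms_closure (g n @` F).
    pose Sn := f n @^-1` ms_nbhd (g n @` F) (eps n).
    pose Tn := phi n @^-1` Sn.
    pose K' := ms_closure (f' n @` Tn).
    pose V := g' n @^-1` ms_nbhd (f' n @` Tn) (eps n).
    have oSn : ms_open Sn := lip1_open (iso_lip1 (hf n)) (ms_nbhd_open _ _).
    have oTn : ms_open Tn := lip1_open (phil n) oSn.
    exists V; first split.
    - exact: lip1_open (iso_lip1 (hg' n)) (ms_nbhd_open _ _).
    - move=> a [_ [x' Tx' <-] hw].
      move: Tx'; rewrite /Tn /Sn /= => -[_ [y Fy <-] hz].
      have [x'' [h1 h2]] := hpsi n a.
      exists y => //.
      have := hg n y (psi n a).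
      have := ms_dist_tri (g n y) (f n (phi n x')) (g n (psi n a)).
      have := ms_dist_tri (f n (phi n x')) (f n (phi n x'')) (g n (psi n a)).
      have := hf n (phi n x') (phi n x''); have := phil n x' x''.
      have := hf' n x' x''; have := ms_dist_tri (f' n x') (g' n a) (f' n x'').
      lra.
    have mAn := @cmm_measure _ (A n); have mBn := @cmm_measure _ (B n).
    have cK : ms_closed K := ms_closure_closed _.
    have cK' : ms_closed K' := ms_closure_closed _.
    have m1 : @cmm_mu _ Ai F <= @cmm_mu _ Ai (g n @^-1` K).
      apply: (mu_mono mAi (closed_borel cF)).
        exact: closed_borel (lip1_closed (iso_lip1 (hg n)) cK).
      by move=> y Fy; apply: ms_sub_closure; exists y.
    have m2 := (HP n K cK).2.
    have m3 : @cmm_mu _ (A n) (f n @^-1` ms_nbhd K (eps n)) <= @cmm_mu _ (A n) Sn.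
      apply: (mu_mono mAn).
      - exact: open_borel (lip1_open (iso_lip1 (hf n)) (ms_nbhd_open _ _)).
      - exact: open_borel.
      - by apply: preimage_subset; exact: ms_nbhd_closure.
    have m4 := phim n Sn (open_borel oSn).
    have m5 : @cmm_mu _ (B n) Tn <= @cmm_mu _ (B n) (f' n @^-1` K').
      apply: (mu_mono mBn (open_borel oTn)).
        exact: closed_borel (lip1_closed (iso_lip1 (hf' n)) cK').
      by move=> x' Tx'; apply: ms_sub_closure; exists x'.
    have m6 := (HP' n K' cK').1.
    have m7 : @cmm_mu _ Bi (g' n @^-1` ms_nbhd K' (eps n)) <= @cmm_mu _ Bi V.
      apply: (mu_mono mBi).
      - exact: open_borel (lip1_open (iso_lip1 (hg' n)) (ms_nbhd_open _ _)).
      - exact: open_borel (lip1_open (iso_lip1 (hg' n)) (ms_nbhd_open _ _)).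
      - by apply: preimage_subset; exact: ms_nbhd_closure.
    rewrite /Tn in m4 m5; lra.
  have step8b : forall r, 0 < r -> @cmm_mu _ Ai F <= @cmm_mu _ Bi (Phi @^-1` ms_nbhd F r).
    move=> r r0; apply/ler_addgt0Pr => t t0.
    have [n [hu he1 he2]] := filter3 PU (unif (r / 2) (divr_gt0 r0 (ltr0n _ 2)))
      (epsU (r / 8) (divr_gt0 r0 (ltr0n _ 8))) (epsU (t / 2) (divr_gt0 t0 (ltr0n _ 2))).
    rewrite /= in hu he1 he2.
    have [V [oV sV] hV] := step8a n.
    have sub : V `<=` Phi @^-1` ms_nbhd F r.
      move=> a Va; have [y Fy hy] := sV a Va; exists y => //.
      have := ms_dist_tri y (psi n a) (Phi a); have := hu a.
      have := ms_dist_sym (psi n a) (Phi a); lra.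
    have := mu_mono mBi (open_borel oV) (open_borel (lip1_open Phil (ms_nbhd_open F r))) sub.
    lra.
  pose W k := Phi @^-1` ms_nbhd F (k.+1%:R^-1).
  have hWB : forall k, ms_borel (W k).
    by move=> k; apply: open_borel; apply: (lip1_open Phil); exact: ms_nbhd_open.
  have hdec : forall k, W k.+1 `<=` W k.
    move=> k a [y Fy h]; exists y => //; apply: lt_le_trans h _.
    by rewrite lef_pV2 ?posrE // ler_nat.
  have eqW : \bigcap_k W k = Phi @^-1` F.
    apply/seteqP; split; last first.
      by move=> a Fa k _; exists (Phi a) => //; rewrite ms_dist_xx invr_gt0.
    move=> a ha; apply: (ms_closed_closure _ cF) => d d0.
    have [k hk] := exists_inv_lt d0; have [y Fy hy] := ha k I.
    by exists y => //; apply: lt_trans hy hk.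
  have hc := mu_cont_above mBi hWB hdec; rewrite eqW in hc.
  apply/ler_addgt0Pr => t t0; have [N hN] := cvg_ev hc t0.
  have /andP [_ h] := hN N (leqnn N).
  have hN0 : 0 < (N.+1%:R : R)^-1 by rewrite invr_gt0 ltr0n.
  have := step8b _ hN0; rewrite -/(W N); lra.
exists Phi; split.
- move=> y; have [a ha] := surj y; by exists a.
- exact: Phil.
move=> S hS; apply/ler_addgt0Pr => t t0.
have [F [cF FS] hF] := inner_regular mAi S t hS t0.
have := closed_ineq F cF.
have := mu_mono mBi (lip1_borel Phil (closed_borel cF)) (lip1_borel Phil hS) (preimage_subset FS).
lra.
Qed.
End main.


Lemma dchoice3 {R : realType} {X : nat -> cmm_space R} {Y : cmm_space R}
  {P : forall n (Z : metric_space R), (X n -> Z) -> (Y -> Z) -> Prop} :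
  (forall n, exists Z f g, P n Z f g) ->
  exists (Z : nat -> metric_space R) (f : forall n, X n -> Z n) (g : forall n, Y -> Z n),
    forall n, P n (Z n) (f n) (g n).
Proof.
move=> h.
have h1 : forall n, {Z : metric_space R & {f : X n -> Z & {g : Y -> Z | P n Z f g}}}.
  move=> n; have [Z hZ] := cid (h n); have [f hf] := cid hZ; have [g hg] := cid hf.
  exact: (existT _ Z (existT _ f (exist _ g hg))).
exists (fun n => projT1 (h1 n)), (fun n => projT1 (projT2 (h1 n))),
  (fun n => proj1_sig (projT2 (projT2 (h1 n)))).
move=> n; exact: (proj2_sig (projT2 (projT2 (h1 n)))).
Qed.

Lemma dchoice1 {A B : nat -> Type} {P : forall n, (B n -> A n) -> Prop} :
  (forall n, exists phi, P n phi) -> exists phi : forall n, B n -> A n, forall n, P n (phi n).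
Proof.
move=> h; exists (fun n => proj1_sig (cid (h n))) => n; exact: (proj2_sig (cid (h n))).
Qed.

Theorem proposition3p11 (R : realType) (X X' : nat -> cmm_space R)
  (Xinf X'inf : cmm_space R) :
  d_GHP (X n) Xinf @[n --> \oo] --> 0 ->
  d_GHP (X' n) X'inf @[n --> \oo] --> 0 ->
  (forall n, ghp_le (X n) (X' n)) ->
  ghp_le Xinf X'inf.
Proof.
move=> cX cX' hle.
pose eps n := `|d_GHP (X n) Xinf| + `|d_GHP (X' n) X'inf| + (n.+1%:R : R)^-1.
have eps0 : forall n, 0 < eps n.
  move=> n; have := normr_ge0 (d_GHP (X n) Xinf); have := normr_ge0 (d_GHP (X' n) X'inf).
  have : 0 < (n.+1%:R : R)^-1 by rewrite invr_gt0 ltr0n.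
  rewrite /eps; move: ((n.+1%:R : R)^-1) => q; lra.
have epsc : eps @ \oo --> 0.
  have h := @cvgD R R nat eventually eventually_filter _ _ _ _
    (@cvgD R R nat eventually eventually_filter _ _ _ _
       (@cvg_norm R R nat eventually eventually_filter _ _ cX)
       (@cvg_norm R R nat eventually eventually_filter _ _ cX'))
    (@cvg_harmonic R).
  rewrite normr0 !addr0 in h; exact: h.
have hlt : forall n, d_GHP (X n) Xinf < eps n.
  move=> n; have := ler_norm (d_GHP (X n) Xinf); have := normr_ge0 (d_GHP (X' n) X'inf).
  have : 0 < (n.+1%:R : R)^-1 by rewrite invr_gt0 ltr0n.
  rewrite /eps; move: ((n.+1%:R : R)^-1) => q; lra.
have hlt' : forall n, d_GHP (X' n) X'inf < eps n.
  move=> n; have := ler_norm (d_GHP (X' n) X'inf); have := normr_ge0 (d_GHP (X n) Xinf).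
  have : 0 < (n.+1%:R : R)^-1 by rewrite invr_gt0 ltr0n.
  rewrite /eps; move: ((n.+1%:R : R)^-1) => q; lra.
have [Z [f [g hW]]] := dchoice3 (fun n => ghp_witness (hlt n)).
have [Z' [f' [g' hV]]] := dchoice3 (fun n => ghp_witness (hlt' n)).
have [phi hphi] := dchoice1 (fun n => (hle n : exists phi : X' n -> X n, _)).
apply: (@main_le R X X' Xinf X'inf phi _ _ _ eps epsc Z f g _ _ _ _ _ Z' f' g').
- by move=> n; have [h _ _] := hphi n; exact: h.
- by move=> n; have [_ h _] := hphi n; exact: h.
- by move=> n; have [_ _ h] := hphi n; exact: h.
- by move=> n; have [h _ _ _ _] := hW n; exact: h.
- by move=> n; have [_ h _ _ _] := hW n; exact: h.
- by move=> n; have [_ _ h _ _] := hW n; exact: h.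
- by move=> n; have [_ _ _ h _] := hW n; exact: h.
- by move=> n; have [_ _ _ _ h] := hW n; exact: h.
- by move=> n; have [h _ _ _ _] := hV n; exact: h.
- by move=> n; have [_ h _ _ _] := hV n; exact: h.
- by move=> n; have [_ _ h _ _] := hV n; exact: h.
- by move=> n; have [_ _ _ h _] := hV n; exact: h.
- by move=> n; have [_ _ _ _ h] := hV n; exact: h.
Qed.
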